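(* Let $d\ge1$ and let $X_1,\dots,X_d$ be non-negative integrable random variables that are pairwise independent. Let $\tilde X_1,\dots,\tilde X_d$ be mutually independent with $\tilde X_i$ equal in distribution to $X_i$. Then $\mathbb{E}\max_{i\in[d]}X_i\ge\frac12\mathbb{E}\max_{i\in[d]}\tilde X_i$.
   Context: $[d]=\{1,\dots,d\}$. *)

(* Defs.v *)
From HB Require Import structures.
From mathcomp Require Import all_boot all_order all_algebra.
From mathcomp Require Import all_classical all_reals all_analysis.
Set Implicit Arguments. Unset Strict Implicit. Unset Printing Implicit Defensive.
Import Order.TTheory GRing.Theory Num.Theory.
Local Open Scope classical_set_scope.
Local Open Scope ring_scope.

Definition pairwise_indep {dT : measure_display} {T : measurableType dT}
  {R : realType} (P : probability T R) (n : nat) (X : 'I_n -> {RV P >-> R}) :=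
  forall (i j : 'I_n), i != j ->
  forall (A B : set R), measurable A -> measurable B ->
  P (X i @^-1` A `&` X j @^-1` B) = (P (X i @^-1` A) * P (X j @^-1` B))%E.

Definition mutual_indep {dT : measure_display} {T : measurableType dT}
  {R : realType} (P : probability T R) (n : nat) (X : 'I_n -> {RV P >-> R}) :=
  forall (S : {set 'I_n}) (A : 'I_n -> set R), (forall i, measurable (A i)) ->
  P (\bigcap_(i in [set i | i \in S]) X i @^-1` A i)
  = (\prod_(i in S) P (X i @^-1` A i))%E.

Definition maxRV {T : Type} {R : realType} (n : nat) (X : 'I_n -> T -> R) : T -> R :=
  fun w => \big[Num.max/0]_(i < n) X i w.

(* Main.v *)
Require Import Defs.
From HB Require Import structures.
From mathcomp Require Import all_boot all_order all_algebra.
From mathcomp Require Import all_classical all_reals all_analysis.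
From mathcomp Require Import lra measurable_realfun.
Import Order.TTheory GRing.Theory Num.Theory.
Local Open Scope classical_set_scope.
Local Open Scope ring_scope.

Section generic.
Context {dT : measure_display} {T : measurableType dT} {R : realType}
  (P : probability T R).

Definition pr (A : set T) : R := fine (P A).

Lemma prE A : measurable A -> P A = (pr A)%:E.
Proof. by move=> mA; rewrite /pr fineK// fin_num_measure. Qed.

Lemma pr_ge0 A : 0 <= pr A.
Proof. by rewrite /pr fine_ge0. Qed.

Lemma pr_le1 A : measurable A -> pr A <= 1.
Proof. by move=> mA; rewrite -lee_fin -prE// probability_le1. Qed.

Lemma pr_le A B : measurable A -> measurable B -> A `<=` B -> pr A <= pr B.
Proof. by move=> mA mB AB; rewrite -lee_fin -!prE// le_measure// inE. Qed.

Lemma prU A B : measurable A -> measurable B ->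
  pr (A `|` B) = pr A + pr B - pr (A `&` B).
Proof.
move=> mA mB; apply/EFin_inj.
have mAB : measurable (A `|` B) by exact: measurableU.
have mAiB : measurable (A `&` B) by exact: measurableI.
rewrite EFinB EFinD -(prE _ mAB) -(prE _ mA) -(prE _ mB) -(prE _ mAiB).
rewrite measureUfinl//; by rewrite -ge0_fin_numE// fin_num_measure.
Qed.

Lemma bigU_measurable {I : Type} (A : I -> set T) (s : seq I) :
  (forall i, measurable (A i)) -> measurable (\big[setU/set0]_(i <- s) A i).
Proof.
move=> mA; elim: s => [|i s IH]; first by rewrite big_nil.
by rewrite big_cons; exact: measurableU.
Qed.

Lemma pr_bigU_le {I : Type} (B : set T) (A : I -> set T) (s : seq I) :
  measurable B -> (forall i, measurable (A i)) ->
  pr (B `&` \big[setU/set0]_(i <- s) A i) <= \sum_(i <- s) pr (B `&` A i).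
Proof.
move=> mB mA; elim: s => [|i s IH].
  by rewrite !big_nil setI0 /pr measure0.
rewrite !big_cons setIUr prU; [|exact: measurableI|].
- have := pr_ge0 ((B `&` A i) `&` (B `&` \big[setU/set0]_(j <- s) A j)).
  lra.
- by apply: measurableI => //; exact: bigU_measurable.
Qed.

Lemma pr_lb {I : eqType} (A : I -> set T) (s : seq I) :
  (forall i, measurable (A i)) ->
  (forall i j, i != j -> pr (A i `&` A j) = pr (A i) * pr (A j)) ->
  uniq s ->
  let S := \sum_(i <- s) pr (A i) in
  let u := pr (\big[setU/set0]_(i <- s) A i) in
  (S <= 1 -> S - S * S / 2 <= u) /\ (1 <= S -> 1 / 2 <= u).
Proof.
move=> mA indep; elim: s => [|i s IH] /=.
  by rewrite !big_nil /pr measure0 /=; split => hh; lra.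
move=> /andP[iNs us]; have [IH1 IH2] := IH us.
rewrite !big_cons.
set S' := \sum_(j <- s) pr (A j) in IH1 IH2 *.
set U' := \big[setU/set0]_(j <- s) A j in IH1 IH2 *.
have mU' : measurable U' by exact: bigU_measurable.
have hp0 := pr_ge0 (A i); have hp1 := pr_le1 _ (mA i).
have hS'0 : 0 <= S' by rewrite /S' sumr_ge0// => j _; exact: pr_ge0.
have hu'0 := pr_ge0 U'.
have hmono : pr U' <= pr (A i `|` U').
  apply: pr_le => //; exact: measurableU.
have hI : pr (A i `&` U') <= pr (A i) * S'.
  apply: (le_trans (pr_bigU_le _ _ _ (mA i) mA)).
  rewrite /S' big_distrr /= big_seq [X in _ <= X]big_seq.
  apply: ler_sum => j js; rewrite indep//.
  by apply: contraNneq iNs => ->.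
have hU := prU _ _ (mA i) mU'.
split => hS.
- have hS'1 : S' <= 1 by lra.
  have := IH1 hS'1.
  nra.
- have [hS'1|hS'1] := leP 1 S'.
    have := IH2 hS'1; lra.
  have := IH1 (ltW hS'1).
  nra.
Qed.

Lemma pr_ub {I : Type} (A : I -> set T) (s : seq I) :
  (forall i, measurable (A i)) ->
  pr (\big[setU/set0]_(i <- s) A i) <= \sum_(i <- s) pr (A i).
Proof.
move=> mA; have := pr_bigU_le setT A s measurableT mA.
have -> : \sum_(i <- s) pr (setT `&` A i) = \sum_(i <- s) pr (A i).
  by apply: eq_bigr => i _; rewrite setTI.
by rewrite setTI.
Qed.

End generic.

Section maxlemmas.
Context {dT : measure_display} {T : measurableType dT} {R : realType}.

Lemma bigmax0_ge0 {I : Type} (s : seq I) (f : I -> R) :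
  0 <= \big[Num.max/0]_(i <- s) f i.
Proof.
elim: s => [|i s IH]; first by rewrite big_nil.
by rewrite big_cons le_max IH orbT.
Qed.

Lemma preimage_bigmax {I : Type} (s : seq I) (X : I -> T -> R) (r : R) :
  0 <= r ->
  (fun w => \big[Num.max/0]_(i <- s) X i w) @^-1` `]r, +oo[
  = \big[setU/set0]_(i <- s) (X i @^-1` `]r, +oo[).
Proof.
move=> r0; elim: s => [|i s IH].
  rewrite big_nil; apply/seteqP; split => w //=.
  by rewrite big_nil /= in_itv /= andbT ltNge r0.
rewrite big_cons -IH; apply/seteqP; split => w /=;
  rewrite big_cons !in_itv /= !andbT lt_max.
- by move=> /orP.
- by move=> -[->|->] //; rewrite orbT.
Qed.

Lemma measurable_bigmax {I : Type} (s : seq I) (X : I -> T -> R) :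
  (forall i, measurable_fun setT (X i)) ->
  measurable_fun setT (fun w => \big[Num.max/0]_(i <- s) X i w).
Proof.
move=> mX; elim: s => [|i s IH].
  have -> : (fun w => \big[Num.max/0]_(i <- [::]) X i w) = (fun _ => 0).
    by apply/funext => w; rewrite big_nil.
  exact: measurable_cst.
have -> : (fun w => \big[Num.max/0]_(j <- i :: s) X j w) =
    (X i \max (fun w => \big[Num.max/0]_(j <- s) X j w)).
  by apply/funext => w; rewrite big_cons.
exact: measurable_maxr.
Qed.

End maxlemmas.

Theorem proposition12 (R : realType) (d : nat) (hd : (0 < d)%N)
  (d1 : measure_display) (T1 : measurableType d1) (P : probability T1 R)
  (X : 'I_d -> {RV P >-> R})
  (d2 : measure_display) (T2 : measurableType d2) (Q : probability T2 R)
  (Xt : 'I_d -> {RV Q >-> R}) :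
  (forall i w, 0 <= X i w) ->
  (forall i, P.-integrable setT (EFin \o X i)) ->
  pairwise_indep X ->
  mutual_indep Xt ->
  (forall i (A : set R), measurable A ->
     distribution P (X i) A = distribution Q (Xt i) A) ->
  ('E_P[maxRV (fun i => X i)] >= 2^-1%:E * 'E_Q[maxRV (fun i => Xt i)])%E.
Proof.
move=> X0 Xint pind _ hdist.
have mMX : measurable_fun setT (maxRV (fun i => X i)).
  by apply: measurable_bigmax => i.
have mMZ : measurable_fun setT (maxRV (fun i => Xt i)).
  by apply: measurable_bigmax => i.
pose Y : {RV P >-> R} := mfun_Sub (mem_set mMX : maxRV (fun i => X i) \in mfun).
pose Z : {RV Q >-> R} := mfun_Sub (mem_set mMZ : maxRV (fun i => Xt i) \in mfun).
have -> : ('E_P[maxRV (fun i => X i)] = 'E_P[Y])%E by [].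
have -> : ('E_Q[maxRV (fun i => Xt i)] = 'E_Q[Z])%E by [].
rewrite (ge0_expectation_ccdf (X:=Y)); last by move=> w; exact: bigmax0_ge0.
rewrite (ge0_expectation_ccdf (X:=Z)); last by move=> w; exact: bigmax0_ge0.
have mI : measurable (`[0%R, +oo[ : set R) by [].
have mccZ : measurable_fun (`[0%R, +oo[ : set R) (ccdf Z).
  by apply: (measurable_funS measurableT) => //; exact: ccdf_measurable.
have mccY : measurable_fun (`[0%R, +oo[ : set R) (ccdf Y).
  by apply: (measurable_funS measurableT) => //; exact: ccdf_measurable.
rewrite -ge0_integralZl//.
apply: ge0_le_integral => //.
- move=> r _; apply: mule_ge0; first by rewrite lee_fin invr_ge0.
  exact: measure_ge0.
- exact: measurable_funeM.
move=> r; rewrite /= in_itv /= andbT => r0.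
pose A i := (X i : T1 -> R) @^-1` `]r, +oo[.
pose B i := (Xt i : T2 -> R) @^-1` `]r, +oo[.
have mA i : measurable (A i) by exact: measurable_funPTI.
have mB i : measurable (B i) by exact: measurable_funPTI.
have eY : ccdf Y r = P (\big[setU/set0]_(i <- index_enum 'I_d) A i).
  rewrite /ccdf /distribution /pushforward; congr (P _).
  by rewrite /A -(preimage_bigmax _ _ _ r0).
have eZ : ccdf Z r = Q (\big[setU/set0]_(i <- index_enum 'I_d) B i).
  rewrite /ccdf /distribution /pushforward; congr (Q _).
  by rewrite /B -(preimage_bigmax _ _ _ r0).
have eAB i : pr P (A i) = pr Q (B i).
  have := hdist i _ (measurable_itv `]r, +oo[).
  by rewrite /distribution /pushforward /pr => ->.
have indep i j : i != j -> pr P (A i `&` A j) = pr P (A i) * pr P (A j).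
  move=> ij; apply/EFin_inj; rewrite EFinM -!prE //; last exact: measurableI.
  exact: pind.
rewrite eY eZ (prE P _ (bigU_measurable _ _ mA)) (prE Q _ (bigU_measurable _ _ mB)).
rewrite -EFinM lee_fin.
have [lb1 lb2] := pr_lb P A (index_enum 'I_d) mA indep (index_enum_uniq _).
have ub := pr_ub Q B (index_enum 'I_d) mB.
have ub1 := pr_le1 Q _ (bigU_measurable _ (index_enum 'I_d) mB).
have eS : \sum_(i <- index_enum 'I_d) pr Q (B i) = \sum_(i <- index_enum 'I_d) pr P (A i).
  by apply: eq_bigr => i _; rewrite eAB.
rewrite eS in ub.
move: lb1 lb2 ub ub1.
set S := \sum_(i <- index_enum 'I_d) pr P (A i).
set u := pr P _. set q := pr Q _.
move=> lb1 lb2 ub ub1.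
have [hS|hS] := leP S 1.
  have S0 : 0 <= S by rewrite /S sumr_ge0// => i _; exact: pr_ge0.
  have SS : S * S <= S by nra.
  have := lb1 hS; lra.
have := lb2 (ltW hS); lra.
Qed.
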